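(* Let $P,\tilde P\in\mathbb{R}^{n\times m}$ with $\mathrm{rank}(P)=n$, and let $\Omega=c+G\mathbf{B}_p$ with $c\in\mathbb{R}^m$, $G\in\mathbb{R}^{m\times p}$, $\mathrm{rank}(G)=m$. Assume $\|(\tilde P-P)c\|\le\|PG\|_l$. Then $\tilde P(c+\alpha G\mathbf{B}_p)\subseteq P\Omega$ for every $\alpha\in[0,\alpha_m]$, where $$\alpha_m=\frac{\|PG\|_l-\|(\tilde P-P)c\|}{\|PG\|_l+\|(\tilde P-P)G\|}.$$
   Context: A norm $\|\cdot\|$ is fixed on each $\mathbb{R}^k$; $\mathbf{B}_k$ is its closed unit ball, and matrices carry the induced operator norms $\|M\|=\sup_{\|x\|\le1}\|Mx\|$. For $M\in\mathbb{R}^{n\times m}\setminus\{0\}$ the matrix lower bound is $\|M\|_l=\max\{\mu\in\mathbb{R}:\ \forall y\in\mathrm{col}(M)\ \exists x\in\mathbb{R}^m \text{ with } Mx=y \text{ and } \mu\|x\|\le\|y\|\}$, where $\mathrm{col}(M)$ is the column space. Minkowski sums and images of sets under matrices are used. *)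

(* Defs.v *)
From HB Require Import structures.
From mathcomp Require Import all_boot all_order all_algebra.
From mathcomp Require Import boolp classical_sets reals.
Set Implicit Arguments. Unset Strict Implicit. Unset Printing Implicit Defensive.
Import Order.TTheory GRing.Theory Num.Theory.
Local Open Scope ring_scope.
Local Open Scope classical_set_scope.

Section Defs.
Variable R : realType.

Definition is_norm (k : nat) (N : 'cV[R]_k -> R) : Prop :=
  [/\ forall x y, N (x + y) <= N x + N y,
      forall (a : R) x, N (a *: x) = `|a| * N x
    & forall x, N x = 0 -> x = 0].

Definition norm_family (nrm : forall k, 'cV[R]_k -> R) : Prop :=
  forall k, is_norm (nrm k).

Local Unset Implicit Arguments.
Variable nrm : forall k, 'cV[R]_k -> R.
Local Set Implicit Arguments.

Definition unit_ball (k : nat) : set 'cV[R]_k := [set x | nrm k x <= 1].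

Definition opnorm (n m : nat) (M : 'M[R]_(n, m)) : R :=
  sup [set nrm n (M *m x) | x in @unit_ball m].

Definition lb_set (n m : nat) (M : 'M[R]_(n, m)) : set R :=
  [set mu | forall y : 'cV[R]_n, (exists z, M *m z = y) ->
              exists x : 'cV[R]_m, M *m x = y /\ mu * nrm m x <= nrm n y].

(* matrix lower bound ||M||_l = max (lb_set M); the max exists for M <> 0,
   so it coincides with the supremum *)
Definition mx_lbound (n m : nat) (M : 'M[R]_(n, m)) : R := sup (lb_set M).

Definition msum (k : nat) (A B : set 'cV[R]_k) : set 'cV[R]_k :=
  [set a + b | a in A & b in B].
Definition sscale (k : nat) (a : R) (A : set 'cV[R]_k) : set 'cV[R]_k :=
  [set a *: x | x in A].
Definition mx_img (n m : nat) (M : 'M[R]_(n, m)) (A : set 'cV[R]_m)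
  : set 'cV[R]_n := [set M *m x | x in A].

End Defs.
Arguments unit_ball {R} nrm k.

(* Main.v *)
Require Import Defs.
From HB Require Import structures.
From mathcomp Require Import all_boot all_order all_algebra.
From mathcomp Require Import all_classical all_reals topology normedtype derive.
Import Order.TTheory GRing.Theory Num.Def Num.Theory.
From mathcomp Require Import lra.
Import numFieldNormedType.Exports.
Local Open Scope ring_scope.
Local Open Scope classical_set_scope.

Section Aux.
Variable R : realType.

Lemma entry_le (m n : nat) (x : 'M[R]_(m,n)) i j : `|x i j| <= `|x|.
Proof.
rewrite [leRHS]/normr /= mx_normrE. apply/bigmax_geP; right; by exists (i,j).
Qed.

Variable k : nat.
Variable N : 'cV[R]_k -> R.
Hypothesis HN : is_norm N.

Lemma N0 : N 0 = 0.
Proof. case: HN => _ HZ _. by rewrite -(scale0r 0) HZ normr0 mul0r. Qed.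

Lemma NN x : N (- x) = N x.
Proof. case: HN => _ HZ _. by rewrite -scaleN1r HZ normrN normr1 mul1r. Qed.

Lemma Nge0 x : 0 <= N x.
Proof.
case: HN => HT _ _. have := HT x (- x). rewrite subrr N0 NN. move=> h; lra.
Qed.

Lemma Ndist x y : `|N x - N y| <= N (x - y).
Proof.
case: HN => HT _ _. rewrite ler_norml; apply/andP; split.
  have := HT (y - x) x. rewrite subrK -opprB NN. lra.
have := HT (x - y) y. rewrite subrK. lra.
Qed.

Lemma Nsum (I : Type) (r : seq I) (F : I -> 'cV[R]_k) :
  N (\sum_(i <- r) F i) <= \sum_(i <- r) N (F i).
Proof.
case: HN => HT _ _.
elim/big_rec2: _ => [|i y1 y2 _ H]; first by rewrite N0.
apply: le_trans (HT _ _) _. by rewrite lerD2l.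
Qed.

Lemma Nmul (q : nat) (M : 'M[R]_(k, q)) (x : 'cV[R]_q) (b : R) :
  (forall j, `|x j 0| <= b) -> N (M *m x) <= b * \sum_j N (col j M).
Proof.
case: HN => _ HZ _ Hb.
have -> : M *m x = \sum_j x j 0 *: col j M.
  apply/matrixP => i l; rewrite !mxE summxE; apply: eq_bigr => j _.
  by rewrite !mxE (ord1 l) mulrC.
apply: le_trans; first exact: Nsum. rewrite mulr_sumr; apply: ler_sum => j _.
rewrite HZ ler_wpM2r //; exact: Nge0.
Qed.


End Aux.
Arguments N0 {R k N}.
Arguments NN {R k N}.
Arguments Nge0 {R k N}.
Arguments Ndist {R k N}.
Arguments Nsum {R k N}.
Arguments Nmul {R k N}.

Section Aux2.
Variable R : realType.

Lemma lip_cont (k : nat) (K : R) (h : 'rV[R]_k -> R) :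
  (forall u v, `|h u - h v| <= K * `|u - v|) -> continuous h.
Proof.
move=> Hl x; apply/(@cvgrPdist_lt _ _ _ (nbhs x) (nbhs_filter x)) => e e0.
have K1 : 0 < `|K| + 1 by rewrite ltr_pwDr.
have := @cvgr_dist_lt _ _ _ (nbhs x) (nbhs_filter x) id x (@cvg_id _ (nbhs x)) (e / (`|K|+1)) (divr_gt0 e0 K1).
apply: filterS => t Ht.
apply: le_lt_trans (Hl x t) _.
set d := `|x - t| in Ht *.
have d0 : 0 <= d by rewrite normr_ge0.
set q := e / (`|K| + 1) in Ht.
have eq : e = q * (`|K| + 1) by rewrite /q divfK // gt_eqF.
have KK : K <= `|K| := ler_norm K.
have Kp : 0 <= `|K| := normr_ge0 K.
rewrite eq; nra.
Qed.

Lemma unit_scale (k : nat) (v : 'rV[R]_k) : v != 0 -> `| `|v|^-1 *: v| = 1.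
Proof.
move=> v0; rewrite normrZ normfV normr_id mulVf // normr_eq0 //.
Qed.

Lemma norm_equiv (k : nat) (N : 'cV[R]_k -> R) : is_norm N ->
  exists2 C, 0 < C & forall v : 'rV[R]_k, `|v| <= C * N v^T.
Proof.
move=> HN.
have Ncont : continuous (fun v : 'rV[R]_k => N v^T).
  apply: (@lip_cont k (\sum_j N (col j 1%:M))) => u v.
  apply: le_trans (Ndist HN _ _) _. rewrite -linearB /= mulrC.
  have -> : (u - v)^T = 1%:M *m (u-v)^T by rewrite mul1mx.
  apply: (Nmul HN) => j. rewrite mxE. exact: entry_le.
case: k N HN Ncont => [|k] N HN Ncont.
  exists 1 => // v. rewrite thinmx0 normr0 mul1r. exact: Nge0.
pose S := [set v : 'rV[R]_k.+1 | `|v| = 1].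
have S0 : S !=set0.
  have c0 : const_mx 1 != 0 :> 'rV[R]_k.+1.
    apply/eqP => /matrixP /(_ 0 0). rewrite !mxE. apply/eqP; exact: oner_neq0.
  by exists (`|const_mx 1 : 'rV[R]_k.+1|^-1 *: const_mx 1); rewrite /S /= unit_scale.
have cS : compact S.
  apply: bounded_closed_compact.
    exists 1; split => // M M1 v Sv /=; by rewrite Sv ltW.
  rewrite (_ : S = (fun v : 'rV[R]_k.+1 => `|v|) @^-1` [set x : R | x = 1]) //.
  apply: preimage_closed; last exact: closed_eq.
  move=> x _; exact: norm_continuous.
have [v0 /set_mem Sv0 Hmin] := compact_EVT_min S0 cS (@continuous_subspaceT _ _ S _ Ncont).
have v00 : v0 != 0.
  apply/eqP => h; move: Sv0; rewrite /S /= h normr0 => /eqP; rewrite eq_sym oner_eq0.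
  done.
have m0 : 0 < N v0^T.
  rewrite lt_def Nge0 // andbT. apply/eqP => h. case: HN => _ _ H3.
  move: (H3 _ h) => /eqP; rewrite trmx_eq0. by apply/negP.
exists (N v0^T)^-1; first by rewrite invr_gt0.
move=> v. have [->|vn0] := eqVneq v 0.
  by rewrite normr0 mulr_ge0 // ?Nge0 // invr_ge0 ltW.
have := Hmin (`|v|^-1 *: v) (mem_set (unit_scale _ _ vn0)).
case: HN => _ HZ _. rewrite linearZ /= HZ ger0_norm ?invr_ge0 ?normr_ge0 //.
have vp : 0 < `|v| by rewrite normr_gt0.
rewrite ler_pdivlMl // => h.
by rewrite ler_pdivlMl // mulrC.
Qed.


Lemma contM (n q : nat) (Nn : 'cV[R]_n -> R) (HN : is_norm Nn) (M : 'M[R]_(n, q))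
  (w : 'cV[R]_n) : continuous (fun v : 'rV[R]_q => Nn (M *m v^T - w)).
Proof.
apply: (@lip_cont q (\sum_j Nn (col j M))) => u v.
apply: le_trans (Ndist HN _ _) _. rewrite opprB addrA subrK -mulmxBr -linearB /= mulrC.
apply: (Nmul HN) => j. rewrite mxE. exact: entry_le.
Qed.

Lemma min_sol (n q : nat) (Nn : 'cV[R]_n -> R) (Nq : 'cV[R]_q -> R) :
  is_norm Nn -> is_norm Nq -> forall (M : 'M[R]_(n, q)) (w : 'cV[R]_n) z1,
  M *m z1 = w ->
  exists z0, M *m z0 = w /\ forall z, M *m z = w -> Nq z0 <= Nq z.
Proof.
move=> HNn HNq M w z1 Hz1.
pose A := [set v : 'rV[R]_q | Nn (M *m v^T - w) <= 0] `&` [set v | Nq v^T <= Nq z1].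
have Aw : A z1^T by split; rewrite /= trmxK ?Hz1 ?subrr ?N0 //.
have cq : continuous (fun v : 'rV[R]_q => Nq v^T).
  have -> : (fun v : 'rV[R]_q => Nq v^T) = (fun v => Nq (1%:M *m v^T - 0)).
    by apply: funext => v; rewrite mul1mx subr0.
  exact: contM.
have cA : compact A.
  apply: bounded_closed_compact.
    have [C C0 HC] := @norm_equiv _ _ HNq.
    exists (C * Nq z1); split.
      by rewrite ger0_real // mulr_ge0 ?(ltW C0) ?(Nge0 HNq).
    move=> M' M'lt v [_ Av] /=. apply: le_trans (HC v) _.
    apply: ltW; apply: le_lt_trans M'lt. by rewrite ler_wpM2l // ltW.
  apply: closedI.
    have := @preimage_closed _ _ (fun v : 'rV[R]_q => Nn (M *m v^T - w)) [set x : R | x <= 0]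
      (fun x _ => @contM _ _ _ HNn M w x) (@closed_le _ 0).
    by [].
  have := @preimage_closed _ _ (fun v : 'rV[R]_q => Nq v^T) [set x : R | x <= Nq z1]
      (fun x _ => cq x) (@closed_le _ _).
  by [].
have [v0 /set_mem [Av01 Av02] Hmin] :=
  compact_EVT_min (ex_intro _ _ Aw) cA (@continuous_subspaceT _ _ A _ cq).
exists v0^T; split.
  apply/eqP; rewrite -subr_eq0; apply/eqP. case: (HNn) => _ _ H3; apply: H3.
  by apply/le_anti; rewrite Av01 (Nge0 HNn).
move=> z Hz. have [le|lt] := leP (Nq z) (Nq z1).
  have := Hmin z^T; rewrite trmxK; apply; apply: mem_set.
  by split; rewrite /= trmxK ?Hz ?subrr ?N0.
by apply: (le_trans Av02); apply: ltW.
Qed.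

End Aux2.

Theorem lemma6 (R : realType) (nrm : forall k, 'cV[R]_k -> R)
  (Hnrm : norm_family nrm) (n m p : nat)
  (P Pt : 'M[R]_(n, m)) (c : 'cV[R]_m) (G : 'M[R]_(m, p))
  (HP : \rank P = n) (HG : \rank G = m)
  (Hc : nrm n ((Pt - P) *m c) <= mx_lbound nrm (P *m G)) :
  let Omega := msum [set c] (mx_img G (unit_ball nrm p)) in
  let alpha_m := (mx_lbound nrm (P *m G) - nrm n ((Pt - P) *m c)) /
                 (mx_lbound nrm (P *m G) + opnorm nrm ((Pt - P) *m G)) in
  forall alpha : R, 0 <= alpha <= alpha_m ->
    mx_img Pt (msum [set c] (sscale alpha (mx_img G (unit_ball nrm p))))
      `<=` mx_img P Omega.
Proof.
move=> Omega alpha_m alpha /andP [a0 aam] _ [_ [_ -> [_ [_ [b Bb <-] <-] <-]] <-].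
rewrite /alpha_m in aam.
set L := mx_lbound nrm (P *m G) in Hc aam *.
set a := nrm n ((Pt - P) *m c) in Hc aam *.
set K := opnorm nrm ((Pt - P) *m G) in aam *.
have HNn := Hnrm n. have HNp := Hnrm p.
set Q := (Pt - P) *m G.
set w := (Pt - P) *m c + alpha *: (Q *m b).
have [C C0 HC] := @norm_equiv _ _ _ HNp.
pose S := \sum_j nrm n (col j Q).
have S0 : 0 <= S by apply: sumr_ge0 => j _; exact: Nge0.
have Qb : forall x : 'cV[R]_p, nrm n (Q *m x) <= S * (C * nrm p x).
  move=> x. rewrite mulrC. apply: le_trans (@Nmul _ _ _ HNn _ Q x `|x^T| _) _.
    move=> j; have := @entry_le _ _ _ x^T 0 j; by rewrite mxE.
  apply: ler_wpM2r => //; have := HC x^T; by rewrite trmxK.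
have hs : has_sup [set nrm n (Q *m x) | x in unit_ball nrm p].
  split.
    exists (nrm n (Q *m 0)); exists 0 => //. by rewrite /unit_ball /= N0.
  exists (S * C) => _ [x Bx <-]. apply: le_trans (Qb x) _.
  rewrite ler_wpM2l // -[leRHS](mulr1 C) (ler_wpM2l (ltW C0)) //; exact: Bx.
have HK : nrm n (Q *m b) <= K by apply: sup_upper_bound hs _ _; exists b.
have K0 : 0 <= K.
  have h0 : [set nrm n (Q *m x) | x in unit_ball nrm p] 0.
    exists 0; first by rewrite /unit_ball /= N0.
    by rewrite mulmx0 N0.
  exact: (sup_upper_bound hs h0).
have Nw : nrm n w <= a + alpha * K.
  case: (HNn) => HT HZ _. apply: le_trans (HT _ _) _. rewrite lerD2l HZ ger0_norm //.
  by rewrite ler_wpM2l.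
have HPf : row_free P by rewrite /row_free HP.
have HGf : row_free G by rewrite /row_free HG.
have [B HB] : exists B, P *m G *m B = 1%:M.
  move/row_freeP: HPf => [BP HBP]. move/row_freeP: HGf => [BG HBG].
  exists (BG *m BP). by rewrite -mulmxA (mulmxA G) HBG mul1mx HBP.
have a00 : 0 <= a by exact: Nge0.
have [z [Hz Nz]] : exists z, P *m G *m z = w /\ nrm p z + alpha <= 1.
  have [HL|HL] := ltP 0 L.
    have Hz1 : P *m G *m (B *m w) = w by rewrite mulmxA HB mul1mx.
    have [z0 [Hz0 Hmin]] := @min_sol _ _ _ _ _ HNn HNp (P *m G) w _ Hz1.
    have Lz : L * nrm p z0 <= nrm n w.
      have [nz0|nzp] := eqVneq (nrm p z0) 0.
        rewrite nz0 mulr0; exact: Nge0.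
      have nzp' : 0 < nrm p z0 by rewrite lt_def nzp Nge0.
      rewrite -ler_pdivlMr //.
      apply: sup_le_ub.
        exists 0 => y [z <-]. exists z; split => //. by rewrite mul0r Nge0.
      move=> mu Hmu. have [x [Hx Hmux]] := Hmu w (ex_intro _ _ Hz1).
      have [mu0|mu0] := leP mu 0.
        apply: le_trans mu0 _; apply: divr_ge0; exact: Nge0.
      rewrite ler_pdivlMr //. apply: le_trans Hmux. have := Hmin _ Hx; nra.
    exists z0; split => //.
    have LK : 0 < L + K by lra.
    move: aam; rewrite ler_pdivlMr // => aam.
    nra.
  have La : L = 0 /\ a = 0 by lra.
  case: La => L0 aa0.
  move: aam; rewrite L0 aa0 subrr mul0r => aam.
  have al0 : alpha = 0 by apply/le_anti; rewrite aam a0.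
  exists (0 : 'cV[R]_p); split; last by rewrite (N0 HNp) add0r; apply: le_trans aam _; exact: ler01.
  rewrite mulmx0; apply/esym; case: (HNn) => _ _ H3; apply: H3.
  apply/le_anti; rewrite (Nge0 HNn) andbT. apply: le_trans Nw _. by rewrite al0 aa0 mul0r addr0.
exists (c + G *m (z + alpha *: b)).
  exists c => //. exists (G *m (z + alpha *: b)) => //. exists (z + alpha *: b) => //.
  rewrite /unit_ball /=. case: (HNp) => HT HZ _. apply: le_trans (HT _ _) _.
  rewrite HZ ger0_norm //. move: Bb; rewrite /unit_ball /= => Bb. nra.
rewrite !mulmxDr !mulmxA Hz /w !scalemxAr /Q !mulmxA !mulmxBl.
move: (P *m c) (Pt *m c) (P *m G *m (alpha *: b)) (Pt *m G *m (alpha *: b)) => x1 x2 y1 y2.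
by rewrite -(addrA (x2 - x1)) subrK addrA [x1 + _]addrC subrK.
Qed.
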